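(* Let $(X,d)$ be a geodesic metric space, and assume that for every $\lambda>0$ the kernel $k_\lambda(x,y)=\exp(-\lambda\, d^2(x,y))$ is a positive definite kernel on $X$. Then $(X,d)$ is flat in the sense of Alexandrov.
   Context: A path $\gamma\colon[0,L]\to X$ is a geodesic from $x$ to $y$ if $\gamma(0)=x$, $\gamma(L)=y$ and $d(\gamma(t),\gamma(t'))=|t-t'|$ for all $t,t'\in[0,L]$. A metric space is a geodesic metric space if every pair of points is joined by a geodesic. A geodesic triangle consists of three points $a,b,c$ together with geodesics $\gamma_{ab},\gamma_{bc},\gamma_{ac}$ joining them. A geodesic metric space $(X,d)$ is flat in the sense of Alexandrov if every geodesic triangle in $X$ (viewed as a metric subspace with the restricted metric $d$) can be isometrically embedded (i.e. with distances preserved) into a Euclidean space. A positive definite (PD) kernel on a topological space $X$ is a continuous function $k\colon X\times X\to\mathbb{R}$ such that for all $n\in\mathbb{N}$, all $x_1,\dots,x_n\in X$ and all $c_1,\dots,c_n\in\mathbb{R}$, $\sum_{i,j}c_ic_jk(x_i,x_j)\ge 0$; $X$ carries the metric topology. *)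

(* Defs.v *)
From Stdlib Require Import Reals Lra.
Open Scope R_scope.

Definition is_metric {X : Type} (d : X -> X -> R) : Prop :=
  (forall x y, 0 <= d x y) /\
  (forall x y, d x y = 0 <-> x = y) /\
  (forall x y, d x y = d y x) /\
  (forall x y z, d x z <= d x y + d y z).

(** gamma : [0,L] -> X (extended arbitrarily outside [0,L]) is a geodesic from x to y. *)
Definition is_geodesic {X : Type} (d : X -> X -> R) (gamma : R -> X) (L : R)
  (x y : X) : Prop :=
  0 <= L /\ gamma 0 = x /\ gamma L = y /\
  (forall t t', 0 <= t <= L -> 0 <= t' <= L -> d (gamma t) (gamma t') = Rabs (t - t')).

Definition geodesic_space {X : Type} (d : X -> X -> R) : Prop :=
  is_metric d /\ forall x y : X, exists (gamma : R -> X) (L : R), is_geodesic d gamma L x y.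

Definition on_path {X : Type} (gamma : R -> X) (L : R) (p : X) : Prop :=
  exists t, 0 <= t <= L /\ p = gamma t.

(** Euclidean space R^n: vectors are nat -> R, only the first n coordinates matter. *)
Fixpoint sumsq (n : nat) (u v : nat -> R) : R :=
  match n with
  | O => 0
  | S m => sumsq m u v + (u m - v m) ^ 2
  end.

Definition euclid_dist (n : nat) (u v : nat -> R) : R := sqrt (sumsq n u v).

Definition embeds_in_euclidean {X : Type} (d : X -> X -> R) (S : X -> Prop) : Prop :=
  exists (n : nat) (f : X -> nat -> R),
    forall p q, S p -> S q -> euclid_dist n (f p) (f q) = d p q.

Definition alexandrov_flat {X : Type} (d : X -> X -> R) : Prop :=
  geodesic_space d /\
  forall (a b c : X) (gab gbc gac : R -> X) (Lab Lbc Lac : R),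
    is_geodesic d gab Lab a b ->
    is_geodesic d gbc Lbc b c ->
    is_geodesic d gac Lac a c ->
    embeds_in_euclidean d
      (fun p => on_path gab Lab p \/ on_path gbc Lbc p \/ on_path gac Lac p).

Definition kernel_continuous {X : Type} (d : X -> X -> R) (k : X -> X -> R) : Prop :=
  forall x y eps, 0 < eps -> exists delta, 0 < delta /\
    forall x' y', d x x' < delta -> d y y' < delta -> Rabs (k x y - k x' y') < eps.

(** Positive definite kernel (in the sense of the paper: continuous, and all
    Gram quadratic forms nonnegative). Finite families are indexed by 0..n-1. *)
Fixpoint sum_to (n : nat) (f : nat -> R) : R :=
  match n with
  | O => 0
  | S m => sum_to m f + f m
  end.

Definition pd_kernel {X : Type} (d : X -> X -> R) (k : X -> X -> R) : Prop :=
  kernel_continuous d k /\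
  forall (n : nat) (xs : nat -> X) (c : nat -> R),
    0 <= sum_to n (fun i => sum_to n (fun j => c i * c j * k (xs i) (xs j))).

(* Main.v *)
Require Import Defs.
From Stdlib Require Import Reals Lra Psatz ClassicalEpsilon.
Open Scope R_scope.

Lemma exp_bounds x : 0 <= x -> 1 - x <= exp (- x) <= 1 - x + x^2.
Proof.
  intros Hx. split.
  - pose proof (exp_ineq1_le (-x)). lra.
  - pose proof (exp_ineq1_le x). pose proof (exp_pos x).
    rewrite exp_Ropp.
    assert (/ exp x <= / (1 + x)) by (apply Rinv_le_contravar; lra).
    assert (/ (1+x) <= 1 - x + x^2).
    { apply (Rmult_le_reg_l (1+x)); [lra|]. rewrite Rinv_r by lra. nra. }
    lra.
Qed.

Lemma pair_bound w a l : 0 <= a -> 0 < l ->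
  w * exp (- l * a) <= w * (1 - l * a) + Rabs w * (l^2 * a^2).
Proof.
  intros Ha Hl. replace (- l * a) with (- (l*a)) by ring.
  destruct (exp_bounds (l*a)) as [H1 H2]; [nra|].
  destruct (Rle_dec 0 w).
  - rewrite Rabs_right by lra. nra.
  - rewrite Rabs_left by lra. nra.
Qed.

Lemma cnd4 (X : Type) (d : X -> X -> R) (Hm : is_metric d)
  (Hpd : forall lambda : R, 0 < lambda ->
     pd_kernel d (fun x y => exp (- lambda * (d x y) ^ 2)))
  x0 x1 x2 x3 c0 c1 c2 c3 : c0 + c1 + c2 + c3 = 0 ->
  c0*c1*d x0 x1^2 + c0*c2*d x0 x2^2 + c0*c3*d x0 x3^2 + c1*c2*d x1 x2^2
  + c1*c3*d x1 x3^2 + c2*c3*d x2 x3^2 <= 0.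
Proof.
  intros Hc. destruct Hm as (Hpos & Hzero & Hsym & Htri).
  set (S := c0*c1*d x0 x1^2 + c0*c2*d x0 x2^2 + c0*c3*d x0 x3^2 + c1*c2*d x1 x2^2
  + c1*c3*d x1 x3^2 + c2*c3*d x2 x3^2).
  set (M := Rabs (c0*c1)*(d x0 x1^2)^2 + Rabs (c0*c2)*(d x0 x2^2)^2 + Rabs (c0*c3)*(d x0 x3^2)^2
     + Rabs (c1*c2)*(d x1 x2^2)^2 + Rabs (c1*c3)*(d x1 x3^2)^2 + Rabs (c2*c3)*(d x2 x3^2)^2).
  assert (HM : 0 <= M).
  { unfold M. repeat apply Rplus_le_le_0_compat; apply Rmult_le_pos;
    try apply Rabs_pos; nra. }
  assert (Hl : forall l, 0 < l -> l * S <= l^2 * M).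
  { intros l Hl. destruct (Hpd l Hl) as [_ Hk].
    specialize (Hk 4%nat (fun i => match i with 0 => x0 | 1 => x1 | 2 => x2 | _ => x3 end)%nat
                        (fun i => match i with 0 => c0 | 1 => c1 | 2 => c2 | _ => c3 end)%nat).
    cbn [sum_to] in Hk.
    assert (Hd : forall x, d x x = 0) by (intros; apply Hzero; reflexivity).
    rewrite !Hd in Hk.
    rewrite (Hsym x1 x0), (Hsym x2 x0), (Hsym x3 x0), (Hsym x2 x1), (Hsym x3 x1), (Hsym x3 x2) in Hk.
    replace (- l * 0 ^ 2) with 0 in Hk by ring. rewrite exp_0 in Hk.
    pose proof (pair_bound (c0*c1) (d x0 x1^2) l ltac:(nra) Hl).
    pose proof (pair_bound (c0*c2) (d x0 x2^2) l ltac:(nra) Hl).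
    pose proof (pair_bound (c0*c3) (d x0 x3^2) l ltac:(nra) Hl).
    pose proof (pair_bound (c1*c2) (d x1 x2^2) l ltac:(nra) Hl).
    pose proof (pair_bound (c1*c3) (d x1 x3^2) l ltac:(nra) Hl).
    pose proof (pair_bound (c2*c3) (d x2 x3^2) l ltac:(nra) Hl).
    assert (Hsq : (c0+c1+c2+c3)^2 = 0) by (rewrite Hc; ring).
    unfold S, M. lra. }
  destruct (Rle_dec S 0) as [|Hn]; [assumption|].
  exfalso. set (l := S / (2 * (M+1))).
  assert (0 < l) by (unfold l; apply Rdiv_lt_0_compat; lra).
  specialize (Hl l H).
  assert (l * (M+1) * 2 = S) by (unfold l; field; lra).
  nra.
Qed.
Lemma quad_zero B C : (forall r, r*B + r*r*C <= 0) -> B = 0.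
Proof.
  intros H. destruct (Req_dec B 0) as [|Hn]; [assumption|exfalso].
  set (t := / (Rabs C + 1)).
  assert (Ht : 0 < t) by (unfold t; apply Rinv_0_lt_compat; pose proof (Rabs_pos C); lra).
  assert (Ht2 : t * (Rabs C + 1) = 1) by (unfold t; field; pose proof (Rabs_pos C); lra).
  specialize (H (B*t)).
  assert (HB : 0 < B*B) by (destruct (Rlt_dec B 0); nra).
  assert (- Rabs C <= C) by (destruct (Rle_dec 0 C);
     [rewrite Rabs_right by lra| rewrite Rabs_left by lra]; lra).
  assert (0 < 1 + t*C) by nra.
  assert (0 < B*B * (t*(1+t*C))) by (apply Rmult_lt_0_compat; [lra|apply Rmult_lt_0_compat; lra]).
  assert (B*t*B + B*t*(B*t)*C = B*B*(t*(1+t*C))) by ring. lra.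
Qed.

Lemma key (X : Type) (d : X -> X -> R) (Hm : is_metric d)
  (Hpd : forall lambda : R, 0 < lambda ->
     pd_kernel d (fun x y => exp (- lambda * (d x y) ^ 2)))
  x y p s : d x p = s * d x y -> d p y = (1-s) * d x y ->
  forall z, d z p ^ 2 = (1-s)*d z x^2 + s*d z y^2 - s*(1-s)*d x y^2.
Proof.
  intros H1 H2 z.
  pose proof Hm as (Hpos & Hzero & Hsym & Htri).
  assert (Hq : forall r, r * (- s^2 * d x y^2 + d p z^2 + s*d x y^2 - (1-s)*d x z^2 - s*d y z^2)
                + r*r*(- d x z^2) <= 0).
  { intros r. pose proof (cnd4 X d Hm Hpd p x y z 1 (-(1-s)-r) (-s) r ltac:(ring)) as H.
    rewrite (Hsym p x), H1, H2 in H. nra. }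
  apply quad_zero in Hq.
  rewrite (Hsym z p), (Hsym z x), (Hsym z y). nra.
Qed.

Lemma geo_pt (X : Type) (d : X -> X -> R) g L x y t :
  is_geodesic d g L x y -> 0 <= t <= L ->
  d x (g t) = (t/L) * d x y /\ d (g t) y = (1 - t/L) * d x y.
Proof.
  intros (HL & H0 & HLy & Hd) Ht.
  assert (Dxy : d x y = L).
  { rewrite <- H0, <- HLy, Hd by lra. rewrite Rabs_left1 by lra. ring. }
  assert (Dxt : d x (g t) = t).
  { rewrite <- H0, Hd by lra. rewrite Rabs_left1 by lra. ring. }
  assert (Dty : d (g t) y = L - t).
  { rewrite <- HLy, Hd by lra. rewrite Rabs_left1 by lra. ring. }
  rewrite Dxy, Dxt, Dty.
  destruct (Req_dec L 0) as [HL0|HL0].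
  - assert (t = 0) by lra. subst. unfold Rdiv. split; ring.
  - split; field; lra.
Qed.
Lemma sqrt2x2 P R g : 0 <= P -> 0 <= R -> g^2 <= P*R ->
  let s := sqrt (P*R - g^2) in let tau := sqrt (P + R + 2*s) in
  let S := (P+s)/tau in let T := g/tau in let U := (R+s)/tau in
  S^2 + T^2 = P /\ S*T + T*U = g /\ T^2 + U^2 = R.
Proof.
  intros HP HR Hg s tau S T U.
  assert (Hs0 : 0 <= s) by apply sqrt_pos.
  assert (Hs2 : s*s = P*R - g^2) by (apply sqrt_sqrt; lra).
  assert (Ht2 : tau*tau = P + R + 2*s) by (apply sqrt_sqrt; lra).
  destruct (Req_dec (P + R + 2*s) 0) as [Z|NZ].
  - assert (P = 0) by lra. assert (R = 0) by lra. assert (s = 0) by lra.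
    assert (g = 0) by nra. subst S T U. rewrite Z in Ht2.
    assert (tau = 0) by nra. rewrite H3. unfold Rdiv. rewrite Rinv_0.
    repeat split; nra.
  - assert (Htau : tau <> 0) by (intro E; rewrite E in Ht2; lra).
    subst S T U. repeat split; field_simplify_eq; auto;
    replace (tau^2) with (P+R+2*s) by (rewrite <- Ht2; ring); nra.
Qed.

Theorem theorem1 (X : Type) (d : X -> X -> R) :
  geodesic_space d ->
  (forall lambda : R, 0 < lambda ->
     pd_kernel d (fun x y => exp (- lambda * (d x y) ^ 2))) ->
  alexandrov_flat d.
Proof.
  intros Hg Hpd. split; [exact Hg|].
  destruct Hg as [Hm _].
  pose proof Hm as (Hpos & Hzero & Hsym & Htri).
  assert (Hd : forall x, d x x = 0) by (intros; apply Hzero; reflexivity).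
  intros a b c gab gbc gac Lab Lbc Lac Hab Hbc Hac.
  set (W := fun p (w : R * R) => forall z, d z p ^2 = (1-fst w-snd w)*d z a^2 + fst w*d z b^2 + snd w*d z c^2
        - ((1-fst w-snd w)*fst w*d a b^2 + fst w*snd w*d b c^2 + (1-fst w-snd w)*snd w*d a c^2)).
  assert (HW : forall p, (on_path gab Lab p \/ on_path gbc Lbc p \/ on_path gac Lac p) ->
                exists w, W p w).
  { intros p [[t [Ht ->]]|[[t [Ht ->]]|[t [Ht ->]]]].
    - destruct (geo_pt X d _ _ _ _ t Hab Ht) as [E1 E2].
      exists (t/Lab, 0). intro z; cbn [fst snd]. rewrite (key X d Hm Hpd a b _ _ E1 E2 z). ring.
    - destruct (geo_pt X d _ _ _ _ t Hbc Ht) as [E1 E2].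
      exists (1 - t/Lbc, t/Lbc). intro z; cbn [fst snd]. rewrite (key X d Hm Hpd b c _ _ E1 E2 z). ring.
    - destruct (geo_pt X d _ _ _ _ t Hac Ht) as [E1 E2].
      exists (0, t/Lac). intro z; cbn [fst snd]. rewrite (key X d Hm Hpd a c _ _ E1 E2 z). ring. }
  set (P := d a b ^ 2). set (Rr := d a c ^ 2). set (g := (P + Rr - d b c ^2)/2).
  assert (Hdet : g^2 <= P*Rr).
  { unfold g, P, Rr.
    pose proof (Hpos a b); pose proof (Hpos a c); pose proof (Hpos b c).
    pose proof (Htri b a c); pose proof (Htri a b c); pose proof (Htri a c b).
    rewrite (Hsym b a) in *. rewrite (Hsym c b) in *.
    set (x := d a b) in *; set (y := d a c) in *; set (z := d b c) in *.
    assert (E : (2*x*y)^2 - (x^2+y^2-z^2)^2 = (z-x+y)*(z+x-y)*((x+y-z)*(x+y+z))) by ring.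
    assert (0 <= (z-x+y)*(z+x-y)*((x+y-z)*(x+y+z))).
    { apply Rmult_le_pos; apply Rmult_le_pos; lra. }
    nra. }
  destruct (sqrt2x2 P Rr g ltac:(unfold P; nra) ltac:(unfold Rr; nra) Hdet) as (E1 & E2 & E3).
  set (s := sqrt (P*Rr - g^2)) in *. set (tau := sqrt (P + Rr + 2*s)) in *.
  set (S := (P+s)/tau) in *. set (T := g/tau) in *. set (U := (Rr+s)/tau) in *.
  set (ch := fun p => epsilon (inhabits (0,0)) (W p)).
  exists 2%nat, (fun p i => match i with 0%nat => S * fst (ch p) + T * snd (ch p)
                                       | _ => T * fst (ch p) + U * snd (ch p) end).
  intros p q Hp Hq.
  assert (Wp : W p (ch p)) by (apply epsilon_spec; auto).
  assert (Wq : W q (ch q)) by (apply epsilon_spec; auto).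
  destruct (ch p) as [b1 c1]. destruct (ch q) as [b2 c2].
  unfold W in Wp, Wq; cbn [fst snd] in Wp, Wq.
  assert (Hdist : d p q ^ 2 = P*(b1-b2)^2 + 2*g*(b1-b2)*(c1-c2) + Rr*(c1-c2)^2).
  { rewrite (Hsym p q), (Wp q).
    rewrite (Hsym q a), (Hsym q b), (Hsym q c), (Wq a), (Wq b), (Wq c).
    rewrite !Hd, (Hsym b a), (Hsym c a), (Hsym c b).
    unfold g, P, Rr. field. }
  unfold euclid_dist. simpl sumsq.
  rewrite <- (sqrt_pow2 (d p q)) by apply Hpos. f_equal.
  rewrite Hdist. rewrite <- E1, <- E2, <- E3. ring.
Qed.
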